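(* Let $(L,\le,(\sqsubseteq_\alpha)_{\alpha<\kappa})$ be a model of Axioms 1–4. Let $(x_\alpha)_{\alpha<\kappa}$ be a compatible sequence and let $x=\bigvee_{\alpha<\kappa}x_\alpha$. Then $x|_\alpha=x_\alpha$ for all $\alpha<\kappa$. Consequently, the following two maps are mutually inverse bijections between $L$ and the set of compatible sequences: - $x\mapsto(x|_\alpha)_{\alpha<\kappa}$; - $(x_\alpha)_{\alpha<\kappa}\mapsto\bigvee_{\alpha<\kappa}x_\alpha$.
   Context: Setting (model of Axioms 1–4). Let $(L,\le)$ be a complete lattice with join operation $\bigvee$ and least element $\perp$. Let $\kappa>0$ be an ordinal, and for each ordinal $\alpha<\kappa$ let $\sqsubseteq_\alpha$ be a preorder on $L$. Derived relation: $x=_\alpha y$ means $x\sqsubseteq_\alpha y$ and $y\sqsubseteq_\alpha x$. Derived sets, for $x\in L$ and $\alpha<\kappa$: - $(x]_\alpha=\{y\in L:\forall\beta<\alpha,\ x=_\beta y\}$. - $[x]_\alpha=\{y\in L: x=_\alpha y\}$. For a set $X$, $X\sqsubseteq_\alpha y$ means $x\sqsubseteq_\alpha y$ for all $x\in X$. The structure is a model of Axioms 1–4 if: - (A1) for all $\alpha<\beta<\kappa$, $x\sqsubseteq_\beta y$ implies $x=_\alpha y$; - (A2) $\bigcap_{\alpha<\kappa}=_\alpha$ is the identity relation on $L$; - (A3) for every $x\in L$, every $\alpha<\kappa$ and every $X\subseteq(x]_\alpha$ there is $y\in(x]_\alpha$ with $X\sqsubseteq_\alpha y$ such that for all $z\in(x]_\alpha$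 with $X\sqsubseteq_\alpha z$ we have $y\sqsubseteq_\alpha z$ and $y\le z$; - (A4) for every nonempty $X\subseteq L$, every $\alpha<\kappa$ and every $y\in L$, if $y=_\alpha x$ for all $x\in X$ then $y=_\alpha\bigvee X$. The element $y$ of (A3) is unique and is denoted $\bigsqcup_\alpha X$. The slice of $x$ at $\alpha$ is $x|_\alpha:=\bigsqcup_\alpha\{x\}$, where $\{x\}\subseteq(x]_\alpha$. A sequence $(x_\alpha)_{\alpha<\kappa}$ in $L$ is compatible if each $x_\alpha$ is the $\le$-least element of $[x_\alpha]_\alpha$ and $x_\alpha=_\alpha x_\beta$ for all $\alpha<\beta<\kappa$. *)

(* Defs.v *)
From Stdlib Require Import Classical ClassicalEpsilon.

Set Implicit Arguments.

Section Model.
Variables (L : Type) (le : L -> L -> Prop) (sup : (L -> Prop) -> L).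
(* The ordinal kappa is represented by the well-ordered index type I of
   ordinals alpha < kappa, with strict order lt. *)
Variables (I : Type) (lt : I -> I -> Prop) (pre : I -> L -> L -> Prop).

Definition complete_lattice : Prop :=
  (forall x, le x x) /\
  (forall x y, le x y -> le y x -> x = y) /\
  (forall x y z, le x y -> le y z -> le x z) /\
  (forall X : L -> Prop, (forall x, X x -> le x (sup X)) /\
     (forall u, (forall x, X x -> le x u) -> le (sup X) u)).

Definition nonzero_ordinal : Prop :=
  (exists i : I, True) /\
  (forall a, ~ lt a a) /\
  (forall a b c, lt a b -> lt b c -> lt a c) /\
  (forall a b, lt a b \/ a = b \/ lt b a) /\
  well_founded lt.

Definition preorders : Prop :=
  forall a, (forall x, pre a x x) /\
            (forall x y z, pre a x y -> pre a y z -> pre a x z).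

Definition eqa (a : I) (x y : L) : Prop := pre a x y /\ pre a y x.

Definition lower_set (x : L) (a : I) : L -> Prop :=
  fun y => forall b, lt b a -> eqa b x y.

Definition cls (x : L) (a : I) : L -> Prop := fun y => eqa a x y.

Definition A1 : Prop :=
  forall a b, lt a b -> forall x y, pre b x y -> eqa a x y.

Definition A2 : Prop :=
  forall x y, (forall a, eqa a x y) -> x = y.

Definition is_sqcup (x : L) (a : I) (X : L -> Prop) (y : L) : Prop :=
  lower_set x a y /\ (forall z, X z -> pre a z y) /\
  (forall z, lower_set x a z -> (forall w, X w -> pre a w z) ->
     pre a y z /\ le y z).

Definition A3 : Prop :=
  forall x a (X : L -> Prop), (forall z, X z -> lower_set x a z) ->
    exists y, is_sqcup x a X y.

Definition A4 : Prop :=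
  forall (X : L -> Prop) a y, (exists x, X x) ->
    (forall x, X x -> eqa a y x) -> eqa a y (sup X).

Definition model : Prop :=
  complete_lattice /\ nonzero_ordinal /\ preorders /\ A1 /\ A2 /\ A3 /\ A4.

(* The slice x|_alpha := \bigsqcup_alpha {x}  (the unique such element;
   chosen by Hilbert's epsilon, the default being the bottom sup(empty)). *)
Definition slice (x : L) (a : I) : L :=
  epsilon (inhabits (sup (fun _ => False))) (is_sqcup x a (fun z => z = x)).

Definition compatible (xs : I -> L) : Prop :=
  (forall a y, cls (xs a) a y -> le (xs a) y) /\
  (forall a b, lt a b -> eqa a (xs a) (xs b)).

Definition bigjoin (xs : I -> L) : L := sup (fun z => exists a, z = xs a).

End Model.

(* Main.v *)
Require Import Defs.
From Stdlib Require Import Classical ClassicalEpsilon FunctionalExtensionality.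

Section S.
Variables (L : Type) (le : L -> L -> Prop) (sup : (L -> Prop) -> L).
Variables (I : Type) (lt : I -> I -> Prop) (pre : I -> L -> L -> Prop).
Hypothesis M : model le sup lt pre.

Lemma le_refl x : le x x.
Proof. destruct M as [[H _] _]; auto. Qed.
Lemma le_anti x y : le x y -> le y x -> x = y.
Proof. destruct M as [[_ [H _]] _]; auto. Qed.
Lemma le_trans x y z : le x y -> le y z -> le x z.
Proof. destruct M as [[_ [_ [H _]]] _]; eauto. Qed.
Lemma sup_ub (X : L -> Prop) x : X x -> le x (sup X).
Proof. destruct M as [[_ [_ [_ H]]] _]; apply H. Qed.
Lemma sup_least (X : L -> Prop) u : (forall x, X x -> le x u) -> le (sup X) u.
Proof. destruct M as [[_ [_ [_ H]]] _]; apply H. Qed.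
Lemma lt_irr a : ~ lt a a.
Proof. destruct M as [_ [[_ [H _]] _]]; auto. Qed.
Lemma pre_refl a x : pre a x x.
Proof. destruct M as [_ [_ [H _]]]; apply H. Qed.
Lemma pre_trans a x y z : pre a x y -> pre a y z -> pre a x z.
Proof. destruct M as [_ [_ [H _]]]; apply H. Qed.
Lemma a1 a b x y : lt a b -> pre b x y -> eqa pre a x y.
Proof. destruct M as [_ [_ [_ [H _]]]]; eauto. Qed.
Lemma a2 x y : (forall a, eqa pre a x y) -> x = y.
Proof. destruct M as [_ [_ [_ [_ [H _]]]]]; eauto. Qed.
Lemma a3 x a (X : L -> Prop) : (forall z, X z -> lower_set lt pre x a z) ->
    exists y, is_sqcup le lt pre x a X y.
Proof. destruct M as [_ [_ [_ [_ [_ [H _]]]]]]; eauto. Qed.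
Lemma a4 (X : L -> Prop) a y : (exists x, X x) ->
    (forall x, X x -> eqa pre a y x) -> eqa pre a y (sup X).
Proof. destruct M as [_ [_ [_ [_ [_ [_ H]]]]]]; eauto. Qed.

Lemma eqa_refl a x : eqa pre a x x.
Proof. split; apply pre_refl. Qed.
Lemma eqa_sym a x y : eqa pre a x y -> eqa pre a y x.
Proof. intros [H1 H2]; split; auto. Qed.
Lemma eqa_trans a x y z : eqa pre a x y -> eqa pre a y z -> eqa pre a x z.
Proof. intros [H1 H2] [H3 H4]; split; eapply pre_trans; eauto. Qed.

Lemma slice_spec x a : is_sqcup le lt pre x a (fun z => z = x) (slice le sup lt pre x a).
Proof.
  unfold slice. apply epsilon_spec. apply a3.
  intros z -> b _. apply eqa_refl.
Qed.

Lemma slice_eq x a : eqa pre a x (slice le sup lt pre x a).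
Proof.
  destruct (slice_spec x a) as [H1 [H2 H3]]. split.
  - apply H2; auto.
  - apply (H3 x); auto. intros b _; apply eqa_refl. intros w ->; apply pre_refl.
Qed.

Lemma slice_le x a : le (slice le sup lt pre x a) x.
Proof.
  destruct (slice_spec x a) as [H1 [H2 H3]].
  apply (H3 x); auto. intros b _; apply eqa_refl. intros w ->; apply pre_refl.
Qed.

Lemma slice_least x a y : eqa pre a (slice le sup lt pre x a) y ->
  le (slice le sup lt pre x a) y.
Proof.
  intros Hy. destruct (slice_spec x a) as [H1 [H2 H3]].
  apply H3.
  - intros b Hb. apply eqa_trans with (slice le sup lt pre x a); auto.
    destruct Hy as [Hy _]. eapply a1; eauto.
  - intros w ->. eapply pre_trans. apply H2; reflexivity. apply Hy.
Qed.

Lemma eqa_lift a b x y : lt a b -> eqa pre b x y -> eqa pre a x y.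
Proof. intros H [H1 _]. eapply a1; eauto. Qed.

Lemma sup_tail (f : I -> L) a y :
  (forall b, lt b a -> le (f b) (f a)) ->
  (forall b, ~ lt b a -> eqa pre a y (f b)) ->
  eqa pre a y (sup (fun z => exists b, z = f b)).
Proof.
  intros Hm He.
  set (T := fun z => exists b, ~ lt b a /\ z = f b).
  assert (E : sup (fun z => exists b, z = f b) = sup T).
  { apply le_anti; apply sup_least.
    - intros z [b ->]. destruct (classic (lt b a)) as [Hb|Hb].
      + eapply le_trans. apply Hm; auto. apply sup_ub. exists a; split; auto. apply lt_irr.
      + apply sup_ub. exists b; auto.
    - intros z [b [_ ->]]. apply sup_ub. exists b; auto. }
  rewrite E. apply a4.
  - exists (f a), a; split; auto. apply lt_irr.
  - intros z [b [Hb ->]]; auto.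
Qed.

Lemma compat_mono xs : compatible le lt pre xs ->
  forall a b, lt b a -> le (xs b) (xs a).
Proof.
  intros [H1 H2] a b Hb. apply H1. apply H2; auto.
Qed.

Lemma compat_join xs : compatible le lt pre xs ->
  forall a, eqa pre a (bigjoin sup xs) (xs a).
Proof.
  intros Hc a. apply eqa_sym. unfold bigjoin. apply sup_tail.
  - apply compat_mono; auto.
  - intros b Hb. destruct M as [_ [[_ [_ [_ [Htot _]]]] _]].
    destruct (Htot a b) as [H|[H|H]].
    + apply Hc; auto.
    + subst; apply eqa_refl.
    + contradiction.
Qed.

Lemma part1 xs : compatible le lt pre xs ->
  forall a, slice le sup lt pre (bigjoin sup xs) a = xs a.
Proof.
  intros Hc a. set (x := bigjoin sup xs).
  assert (Ea : eqa pre a x (xs a)) by (apply compat_join; auto).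
  apply le_anti.
  - destruct (slice_spec x a) as [H1 [H2 H3]]. apply H3.
    + intros b Hb. apply eqa_trans with (xs b). apply compat_join; auto.
      apply Hc; auto.
    + intros w ->. apply Ea.
  - apply Hc. apply eqa_trans with x. apply eqa_sym; auto. apply slice_eq.
Qed.

Lemma part2 x : compatible le lt pre (fun a => slice le sup lt pre x a).
Proof.
  split.
  - intros a y Hy. apply slice_least. apply Hy.
  - intros a b Hab. apply eqa_trans with x. apply eqa_sym, slice_eq.
    eapply eqa_lift; eauto. apply slice_eq.
Qed.


Lemma part3 x : bigjoin sup (fun a => slice le sup lt pre x a) = x.
Proof.
  apply eq_sym, a2. intros a.
  apply eqa_trans with (slice le sup lt pre x a). apply slice_eq.
  apply eqa_sym. apply compat_join. apply part2.
Qed.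

End S.

Theorem mainTheorem10 (L : Type) (le : L -> L -> Prop) (sup : (L -> Prop) -> L)
  (I : Type) (lt : I -> I -> Prop) (pre : I -> L -> L -> Prop) :
  model le sup lt pre ->
  (* main claim: slices of the join of a compatible sequence *)
  (forall xs : I -> L, compatible le lt pre xs ->
     forall a, slice le sup lt pre (bigjoin sup xs) a = xs a) /\
  (* consequence: mutually inverse bijections *)
  (forall x : L, compatible le lt pre (fun a => slice le sup lt pre x a)) /\
  (forall x : L, bigjoin sup (fun a => slice le sup lt pre x a) = x) /\
  (forall xs : I -> L, compatible le lt pre xs ->
     (fun a => slice le sup lt pre (bigjoin sup xs) a) = xs).
Proof.
  intros M. split; [|split; [|split]].
  - apply part1; auto.
  - apply part2; auto.
  - apply part3; auto.
  - intros xs Hc. apply functional_extensionality. apply part1; auto.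
Qed.
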